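(* Let $T$ be a triangulation of the oriented 2-sphere (a simplicial complex) with $N+3$ vertices, and $\mathcal E_0$ a set of $2N$ edges whose complement $\bar{\mathcal E}_0$ is a cycle-rooted spanning tree with odd cycle. Order the edges with those of $\mathcal E_0$ first, write the vertex–edge incidence matrix as $R=(R_0\,|\,\tilde R_0)$ with $R_0$ the $(N+3)\times 2N$ block on $\mathcal E_0$ and $\tilde R_0$ the invertible $(N+3)\times(N+3)$ block on $\bar{\mathcal E}_0$, and set $M_0=\begin{pmatrix}\mathrm{Id}_{2N}\\-\tilde R_0^{-1}R_0\end{pmatrix}$ and $E_0=(E_{e,e'})_{e,e'\in\mathcal E_0}$. Then $E=M_0\,E_0\,M_0^T$.
   Context: $R_{v,e}=1$ if $v$ is an endpoint of $e$, else $0$. $E_{e,e'}$: if $e\neq e'$ lie in a common face whose edges in positive cyclic order are $\{a,b\},\{b,c\},\{c,a\}$, then $E_{e,e'}=-1$ if $e'$ immediately follows $e$ and $+1$ if $e'$ immediately precedes $e$; otherwise $E_{e,e'}=0$. A cycle-rooted spanning tree is a connected spanning subgraph with as many edges as vertices. *)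

(* Defs.v *)
From HB Require Import structures.
From mathcomp Require Import all_boot all_order all_algebra.
Set Implicit Arguments. Unset Strict Implicit. Unset Printing Implicit Defensive.
Import Order.TTheory GRing.Theory Num.Theory.

(* A (positively) oriented triangle with vertices a, b, c in positive cyclic
   order is encoded as the triple ((a,b),c).  The set F of oriented faces is
   required to be closed under cyclic rotation, so ((a,b),c) \in F means:
   {a,b,c} is a face and a -> b -> c is its positive cyclic order. *)
Notation faceset n := {set 'I_n * 'I_n * 'I_n}.

Definition tri_edges n (F : faceset n) : {set {set 'I_n}} :=
  [set [set x.1.1; x.1.2] | x in F].

(* Combinatorial triangulation of the oriented 2-sphere on vertex set 'I_n:
   a simplicial complex which is a closed, connected, coherently oriented
   combinatorial surface (every edge in exactly two triangles, inducing
   opposite orientations; every vertex link a single cycle) with Euler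
   characteristic 2. *)
Definition sphere_triangulation n (F : faceset n) : Prop :=
  (forall a b c, ((a, b), c) \in F -> [&& a != b, b != c & c != a]) /\
  (forall a b c, ((a, b), c) \in F -> ((b, c), a) \in F) /\
  (* simplicial: no two faces on the same vertex set *)
  (forall a b c, ((a, b), c) \in F -> ((b, a), c) \notin F) /\
  (forall a b c d, ((a, b), c) \in F -> ((a, b), d) \in F -> c = d) /\
  (forall a b c, ((a, b), c) \in F -> exists d, ((b, a), d) \in F) /\
  (forall v, exists b c, ((v, b), c) \in F) /\
  (* the link of every vertex is a single cycle *)
  (forall v a a', (exists c, ((v, a), c) \in F) ->
                  (exists c, ((v, a'), c) \in F) ->
                  connect (fun x y => ((v, x), y) \in F) a a') /\
  (forall u v, connect (fun x y => [exists z, ((x, y), z) \in F]) u v) /\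
  (* Euler characteristic V - E + F = 2 *)
  (n + #|F| %/ 3 = #|tri_edges F| + 2)%N.

Definition adjS n (S : {set {set 'I_n}}) : rel 'I_n :=
  fun x y => [set x; y] \in S.

(* S is (the edge set of) a cycle-rooted spanning tree whose cycle is odd:
   connected spanning subgraph with as many edges as vertices, and its
   (unique) cycle has odd length. *)
Definition crst_odd n (S : {set {set 'I_n}}) : Prop :=
  [/\ #|S| = n,
      (forall u v, connect (adjS S) u v)
    & exists c : seq 'I_n, ucycle (adjS S) c /\ odd (size c)].

Local Open Scope ring_scope.

Definition incidence (K : fieldType) n m (ed : 'I_m -> {set 'I_n})
  : 'M[K]_(n, m) := \matrix_(v, i) (v \in ed i)%:R.

Definition follows n (F : faceset n) (e e' : {set 'I_n}) : bool :=
  [exists x in F, (e == [set x.1.1; x.1.2]) && (e' == [set x.1.2; x.2])].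

Definition edgeE (K : fieldType) n m (F : faceset n) (ed : 'I_m -> {set 'I_n})
  : 'M[K]_m :=
  \matrix_(i, j)
    (if i == j then 0
     else if follows F (ed i) (ed j) then -1
     else if follows F (ed j) (ed i) then 1 else 0).

(* Main.v *)
Require Import Defs.
From HB Require Import structures.
From mathcomp Require Import all_boot all_order all_algebra.
From mathcomp Require Import ring.
Import Order.TTheory GRing.Theory Num.Theory.
Set Implicit Arguments. Unset Strict Implicit. Unset Printing Implicit Defensive.
Local Open Scope ring_scope.

Lemma set2_cases (T : finType) (a b p q : T) : a != b ->
  [set a; b] = [set p; q] -> (p = a /\ q = b) \/ (p = b /\ q = a).
Proof.
move=> hab E.
have ha : a \in [set p; q] by rewrite -E set21.
have hb : b \in [set p; q] by rewrite -E set22.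
have hp : p \in [set a; b] by rewrite E set21.
have hq : q \in [set a; b] by rewrite E set22.
move: ha hb hp hq; rewrite !inE.
case/orP=> /eqP ea; case/orP=> /eqP eb; subst.
- by rewrite eqxx in hab.
- by left.
- by right.
- by rewrite eqxx in hab.
Qed.

Lemma neq2 (T : finType) (x p q r s : T) :
  x \in [set p; q] -> x \notin [set r; s] -> [set p; q] != [set r; s].
Proof. by move=> h1 h2; apply/eqP=> E; rewrite E in h1; rewrite h1 in h2. Qed.

Lemma ind2 (K : numFieldType) (T : finType) (v x y : T) : x != y ->
  (v \in [set x; y])%:R = (v == x)%:R + (v == y)%:R :> K.
Proof.
rewrite !inE => hxy; have [->|_] := eqVneq v x.
  by rewrite (negbTE hxy) addr0.
by rewrite add0r.
Qed.


Lemma follows1 n (F : faceset n) a b c d :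
  (forall a b c d, ((a, b), c) \in F -> ((a, b), d) \in F -> c = d) ->
  a != b -> ((a, b), c) \in F -> ((b, a), d) \in F -> forall e',
  follows F [set a; b] e' = (e' == [set b; c]) || (e' == [set a; d]).
Proof.
move=> uq hab f1 f2 e'; apply/existsP/orP.
  case=> [[[p q] r]] /andP[xF /andP[/eqP E1 /eqP E2]] /=.
  rewrite /= in E1 E2; case: (set2_cases hab E1) => [[ep eq]|[ep eq]]; subst.
    by left; rewrite (uq _ _ _ _ xF f1).
  by right; rewrite (uq _ _ _ _ xF f2).
case=> /eqP ->.
  by exists ((a, b), c); rewrite f1 /= !eqxx.
by exists ((b, a), d); rewrite f2 /= setUC !eqxx.
Qed.

Lemma follows2 n (F : faceset n) a b c d :
  (forall a b c, ((a, b), c) \in F -> ((b, c), a) \in F) ->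
  (forall a b c d, ((a, b), c) \in F -> ((a, b), d) \in F -> c = d) ->
  a != b -> ((a, b), c) \in F -> ((b, a), d) \in F -> forall e',
  follows F e' [set a; b] = (e' == [set c; a]) || (e' == [set d; b]).
Proof.
move=> rot uq hab f1 f2 e'; apply/existsP/orP.
  case=> [[[p q] r]] /andP[xF /andP[/eqP E1 /eqP E2]] /=.
  rewrite /= in E1 E2; case: (set2_cases hab E2) => [[ep eq]|[ep eq]]; subst.
    by left; rewrite (uq _ _ _ _ (rot _ _ _ xF) f1).
  by right; rewrite (uq _ _ _ _ (rot _ _ _ xF) f2).
case=> /eqP ->.
  by exists ((c, a), b); rewrite (rot _ _ _ (rot _ _ _ f1)) /= !eqxx.
by exists ((d, b), a); rewrite (rot _ _ _ (rot _ _ _ f2)) /= (setUC [set b]) !eqxx.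
Qed.

Lemma gE (T : finType) (K : numFieldType) (ab bc ad ca db : {set T}) :
  ab != bc -> ab != ad -> ab != ca -> ab != db -> bc != ad -> bc != ca ->
  bc != db -> ad != ca -> ad != db -> ca != db -> forall S : {set T},
  ((if S == ab then 0 else if (S == bc) || (S == ad) then -1
    else if (S == ca) || (S == db) then 1 else 0 : K)
  = - (S == bc)%:R - (S == ad)%:R + (S == ca)%:R + (S == db)%:R) /\
  ((if S == ab then 0 else if (S == ca) || (S == db) then -1
    else if (S == bc) || (S == ad) then 1 else 0 : K)
  = (S == bc)%:R + (S == ad)%:R - (S == ca)%:R - (S == db)%:R).
Proof.
move=> h1 h2 h3 h4 h5 h6 h7 h8 h9 h10 S.
have h1' := h1; have h2' := h2; have h3' := h3; have h4' := h4; have h5' := h5.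
have h6' := h6; have h7' := h7; have h8' := h8; have h9' := h9; have h10' := h10.
rewrite eq_sym in h1'; rewrite eq_sym in h2'; rewrite eq_sym in h3'.
rewrite eq_sym in h4'; rewrite eq_sym in h5'; rewrite eq_sym in h6'.
rewrite eq_sym in h7'; rewrite eq_sym in h8'; rewrite eq_sym in h9'.
rewrite eq_sym in h10'.
have [->|n1] := eqVneq S ab.
  rewrite ?eqxx ?(negbTE h1) ?(negbTE h2) ?(negbTE h3) ?(negbTE h4) /=.
  by split; ring.
have [->|n2] := eqVneq S bc.
  rewrite ?eqxx ?(negbTE h1') ?(negbTE h5) ?(negbTE h6) ?(negbTE h7) /=.
  by split; ring.
have [->|n3] := eqVneq S ad.
  rewrite ?eqxx ?(negbTE h2') ?(negbTE h5') ?(negbTE h8) ?(negbTE h9) /=.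
  split; ring.
have [->|n4] := eqVneq S ca.
  rewrite ?eqxx ?(negbTE h3') ?(negbTE h6') ?(negbTE h8') ?(negbTE h10) /=.
  by split; ring.
have [_|n5] := eqVneq S db.
  rewrite ?eqxx ?(negbTE h4') ?(negbTE h7') ?(negbTE h9') ?(negbTE h10') /=.
  by split; ring.
rewrite /=.
by split; ring.
Qed.
Lemma sumS (K : numFieldType) m n (ed : 'I_m -> {set 'I_n}) (S : {set 'I_n}) v :
  injective ed -> (exists k, ed k = S) ->
  \sum_j (ed j == S)%:R * (v \in ed j)%:R = (v \in S)%:R :> K.
Proof.
move=> inj [k <-]; rewrite (bigD1 k) //= eqxx mul1r big1 ?addr0 // => j.
by move/negbTE; rewrite (inj_eq inj) => ->; rewrite mul0r.
Qed.

Lemma edge_row (K : numFieldType) n m (F : faceset n) (ed : 'I_m -> {set 'I_n}) :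
  sphere_triangulation F -> injective ed -> [set ed i | i : 'I_m] = tri_edges F ->
  forall i v, (\sum_j edgeE K F ed i j * (v \in ed j)%:R = 0) /\
              (\sum_j (v \in ed j)%:R * edgeE K F ed j i = 0).
Proof.
move=> [dist [rot [simp [uq [opp _]]]]] edinj edim i v.
have : ed i \in tri_edges F by rewrite -edim; apply: imset_f.
case/imsetP => [[[a b] c] f1 /= ei].
have /and3P[hab hbc hca] := dist _ _ _ f1.
have [d f2] := opp _ _ _ f1.
have /and3P[hba had hdb] := dist _ _ _ f2.
have hcd : c != d by apply/eqP=> e; subst; move: (simp _ _ _ f1); rewrite f2.
have inim : forall x, x \in F -> exists k, ed k = [set x.1.1; x.1.2].
  move=> x xF; have : [set x.1.1; x.1.2] \in [set ed i | i : 'I_m].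
    by rewrite edim; apply: imset_f.
  by case/imsetP=> k _ ->; exists k.
have ibc := inim _ (rot _ _ _ f1).
have iad := inim _ (rot _ _ _ f2).
have ica := inim _ (rot _ _ _ (rot _ _ _ f1)).
have idb := inim _ (rot _ _ _ (rot _ _ _ f2)).
simpl in ibc, iad, ica, idb.
have hcb : c != b by rewrite eq_sym.
have hac : a != c by rewrite eq_sym.
have hda : d != a by rewrite eq_sym.
have hbd : b != d by rewrite eq_sym.
have hdc : d != c by rewrite eq_sym.
have g := @gE _ K [set a; b] [set b; c] [set a; d] [set c; a] [set d; b].
have {g} g := g (neq2 (set21 a b) _) (neq2 (set22 a b) _) (neq2 (set22 a b) _)
  (neq2 (set21 a b) _) (neq2 (set21 b c) _) (neq2 (set21 b c) _)
  (neq2 (set22 b c) _) (neq2 (set22 a d) _) (neq2 (set21 a d) _)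
  (neq2 (set21 c a) _).
have {g} g := g ltac:(by rewrite !inE negb_or hab hac) ltac:(by rewrite !inE negb_or hba hbd)
  ltac:(by rewrite !inE negb_or hbc hba) ltac:(by rewrite !inE negb_or hab had)
  ltac:(by rewrite !inE negb_or hba hbd) ltac:(by rewrite !inE negb_or hbc hba)
  ltac:(by rewrite !inE negb_or hcd hcb) ltac:(by rewrite !inE negb_or hdc hda)
  ltac:(by rewrite !inE negb_or hab had) ltac:(by rewrite !inE negb_or hcd hcb).
have fo1 := follows1 uq hab f1 f2.
have fo2 := follows2 rot uq hab f1 f2.
split.
  rewrite (eq_bigr (fun j => - ((ed j == [set b; c])%:R * (v \in ed j)%:R)
     - (ed j == [set a; d])%:R * (v \in ed j)%:R
     + (ed j == [set c; a])%:R * (v \in ed j)%:R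
     + (ed j == [set d; b])%:R * (v \in ed j)%:R)); last first.
    move=> j _; rewrite mxE -(inj_eq edinj) ei eq_sym fo1 fo2 (g (ed j)).1.
    by rewrite !mulrDl !mulNr.
  rewrite !big_split /= !sumrN !sumS //.
  rewrite (ind2 _ v hbc) (ind2 _ v had) (ind2 _ v hca) (ind2 _ v hdb).
  by ring.
rewrite (eq_bigr (fun j => ((ed j == [set b; c])%:R * (v \in ed j)%:R)
   + (ed j == [set a; d])%:R * (v \in ed j)%:R
   - (ed j == [set c; a])%:R * (v \in ed j)%:R
   - (ed j == [set d; b])%:R * (v \in ed j)%:R)); last first.
  move=> j _; rewrite mxE -(inj_eq edinj) ei fo1 fo2 (g (ed j)).2.
  by rewrite !mulrDr !mulrN !(mulrC (v \in ed j)%:R).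
rewrite !big_split /= !sumrN !sumS //.
rewrite (ind2 _ v hbc) (ind2 _ v had) (ind2 _ v hca) (ind2 _ v hdb).
by ring.
Qed.

Lemma sumpick (K : numFieldType) n (f : 'I_n -> K) x :
  \sum_v f v * (v == x)%:R = f x.
Proof.
rewrite (bigD1 x) //= eqxx mulr1 big1 ?addr0 // => v /negbTE ->.
by rewrite mulr0.
Qed.

Lemma inc_unit (K : numFieldType) n (F : faceset n) (ed' : 'I_n -> {set 'I_n}) :
  sphere_triangulation F -> (forall i, ed' i \in tri_edges F) ->
  crst_odd [set ed' i | i : 'I_n] -> incidence K ed' \in unitmx.
Proof.
move=> [dist _] edT [_ conn [c [/andP[cyc _] oddc]]].
rewrite -row_free_unit; apply/inj_row_free => w Hw.
have edge : forall x y, adjS [set ed' i | i : 'I_n] x y -> w 0 y = - w 0 x.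
  move=> x y; rewrite /adjS => /imsetP[k _ Ek].
  have hxy : x != y.
    have := edT k; rewrite -Ek => /imsetP[[[p q] r] xF /= E].
    have /and3P[hpq _ _] := dist _ _ _ xF.
    apply/eqP => exy; subst y.
    have : p \in [set x; x] by rewrite E set21.
    have : q \in [set x; x] by rewrite E set22.
    by rewrite !inE !orbb => /eqP eq /eqP ep; subst; rewrite eqxx in hpq.
  have : (w *m incidence K ed') 0 k = 0 by rewrite Hw mxE.
  rewrite mxE (eq_bigr (fun v => w 0 v * (v \in [set x; y])%:R)); last first.
    by move=> v _; rewrite mxE Ek.
  under eq_bigr do rewrite (ind2 _ _ hxy) mulrDr.
  rewrite big_split /= !sumpick => h.
  by rewrite -[w 0 y](addKr (w 0 x)) h addr0.
have pl : forall p x, path (adjS [set ed' i | i : 'I_n]) x p ->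
    w 0 (last x p) = (-1) ^+ size p * w 0 x.
  elim=> [|y p IH] x /=; first by rewrite expr0 mul1r.
  case/andP => /edge h /IH ->.
  by rewrite h exprS mulN1r mulrN mulNr.
case: c cyc oddc => [//|x0 p] cyc oddc.
have h0 : w 0 x0 = 0.
  move: (pl _ _ cyc); rewrite last_rcons size_rcons -signr_odd.
  rewrite /= in oddc; rewrite /= oddc expr1 mulN1r => e.
  have : w 0 x0 *+ 2 = 0 by rewrite mulr2n {1}e addNr.
  by move/eqP; rewrite mulrn_eq0 /= => /eqP.
apply/rowP => j; rewrite mxE.
have /connectP[q pp ->] := conn x0 j.
by rewrite (pl _ _ pp) h0 mulr0.
Qed.

Theorem lemma3 (K : numFieldType) (N : nat)
  (F : {set 'I_(N + 3) * 'I_(N + 3) * 'I_(N + 3)})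
  (ed : 'I_(2 * N + (N + 3)) -> {set 'I_(N + 3)}) :
  sphere_triangulation F ->
  injective ed ->
  [set ed i | i : 'I_(2 * N + (N + 3))] = tri_edges F ->
  crst_odd [set ed (rshift (2 * N) i) | i : 'I_(N + 3)] ->
  let R := incidence K ed in
  let M0 := col_mx 1%:M (- (invmx (rsubmx R) *m lsubmx R)) in
  let E := edgeE K F ed in
  E = M0 *m ulsubmx E *m M0^T.
Proof.
move=> sph edinj edim crst R M0 E.
have ER : E *m R^T = 0.
  apply/matrixP => i v; rewrite !mxE.
  rewrite -[RHS](edge_row K sph edinj edim i v).1.
  by apply: eq_bigr => j _; rewrite !mxE.
have RE : R *m E = 0.
  apply/matrixP => v i; rewrite !mxE.
  rewrite -[RHS](edge_row K sph edinj edim i v).2.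
  by apply: eq_bigr => j _; rewrite !mxE.
have RtE : rsubmx R = incidence K (fun i => ed (rshift (2 * N) i)).
  by apply/matrixP => i j; rewrite !mxE.
have Ru : rsubmx R \in unitmx.
  rewrite RtE; apply: (@inc_unit K _ F) => //.
  by move=> i; rewrite -edim; apply: imset_f.
pose W := invmx (rsubmx R).
pose Z := M0 *m row_mx (1%:M : 'M_(2 * N)) (0 : 'M_(2 * N, N + 3)).
have HZ : 1%:M - Z = col_mx 0 W *m R.
  rewrite -[in RHS](hsubmxK R) mul_col_row mulVmx // !mul0mx.
  rewrite /Z /M0 mul_col_row !mul1mx !mulmx0 mulmx1 (scalar_mx_block (2 * N) (N + 3)).
  by rewrite opp_block_mx add_block_mx !subrr sub0r opprK subr0.
have EZ : E = E *m Z^T.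
  apply/eqP; rewrite -subr_eq0 -{1}(mulmx1 E) -mulmxBr -trmx1 -linearB /= HZ.
  by rewrite trmx_mul mulmxA ER mul0mx.
have ZE : E = Z *m E.
  apply/eqP; rewrite -subr_eq0 -{1}(mul1mx E) -mulmxBl HZ.
  by rewrite -mulmxA RE mulmx0.
have hb : row_mx (1%:M : 'M_(2 * N)) (0 : 'M_(2 * N, N + 3)) *m E
    *m col_mx 1%:M 0 = ulsubmx E.
  rewrite -[in LHS](submxK E) mul_row_block mul_row_col.
  by rewrite !mul1mx !mul0mx !addr0 mulmx1 mulmx0 addr0.
rewrite {1}ZE {1}EZ /Z trmx_mul tr_row_mx trmx1 trmx0.
by rewrite -hb !mulmxA.
Qed.
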